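(* Let $\Gamma$ be a simple, undirected, connected graph of order $p$ that contains a cycle, and let $g(\Gamma)$ be its girth. Then $$\gamma_{[3R]}(\Gamma)\le 3p+2-\frac{5g(\Gamma)}{3}.$$
   Context: The girth of a graph is the minimum length of a cycle in it. For a graph $\Gamma=(V,E)$ and $h:V\to\{0,1,2,3,4\}$, let $AN(v)=\{w\in N(v):h(w)\ge 1\}$, $AN[v]=AN(v)\cup\{v\}$ and $h(S)=\sum_{u\in S}h(u)$. $h$ is a triple Roman dominating function (3RDF) if every $v$ with $h(v)<3$ satisfies $h(AN[v])\ge|AN(v)|+3$. The triple Roman domination number $\gamma_{[3R]}(\Gamma)$ is the minimum weight $h(V)$ of a 3RDF of $\Gamma$. *)

(* Defs.v *)
From mathcomp Require Import all_boot all_order all_algebra.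
Set Implicit Arguments. Unset Strict Implicit. Unset Printing Implicit Defensive.

Section Graph.
Variable T : finType.
Variable e : rel T.

Definition graph_cycle (s : seq T) : bool :=
  [&& 3 <= size s, uniq s & cycle e s].

Definition has_cycle_len (k : nat) : bool :=
  [exists t : k.-tuple T, graph_cycle t].

(* girth = least length of a cycle (cycles have length <= #|T|);
   equals #|T|.+1 if the graph is acyclic (irrelevant here). *)
Definition girth : nat := find has_cycle_len (iota 0 #|T|.+1).

Definition AN (h : {ffun T -> 'I_5}) (v : T) : {set T} :=
  [set w | e v w && (1 <= h w)].

Definition ANc (h : {ffun T -> 'I_5}) (v : T) : {set T} := v |: AN h v.

Definition weight (h : {ffun T -> 'I_5}) : nat := \sum_(v : T) (h v : nat).

Definition is_3RDF (h : {ffun T -> 'I_5}) : bool :=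
  [forall v, (h v < 3) ==> (#|AN h v| + 3 <= \sum_(w in ANc h v) (h w : nat))].

(* minimum weight of a 3RDF; every h has weight <= 4|T|, so 4|T| is a
   neutral initial value (and the constant-3 function is a 3RDF). *)
Definition triple_roman_domination_number : nat :=
  \big[minn/4 * #|T|]_(h : {ffun T -> 'I_5} | is_3RDF h) weight h.

End Graph.

(* Main.v *)
Require Import Defs.
From mathcomp Require Import all_boot all_order all_algebra.
From mathcomp Require Import zify lra.
Import GRing.Theory Num.Theory.

Definition fv (n i : nat) : nat :=
  if (i %% 3 == 0) && (i.+1 < n) then 4
  else if (i.+2 == n) && (n %% 3 == 1) then 3 else 0.

Lemma fv_sum_aux n m :
  \sum_(0 <= i < m) fv n i <=
  4 * ((minn m (n - 1) + 2) %/ 3) + 3 * (if (n - 2 < m) && (n %% 3 == 1) then 1 else 0).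
Proof.
elim: m => [|m IH]; first by rewrite big_geq //.
rewrite big_nat_recr //=; move: IH; set S := \sum_(_ <= _ < _) _; rewrite /fv.
case E4: (n %% 3 == 1); case E1: (m %% 3 == 0); case E2: (m.+1 < n); case E3: (m.+2 == n);
 case E5: (n - 2 < m); case E6: (n-2 < m.+1) => /=; lia.
Qed.

Lemma fv_sum n : 3 <= n -> 3 * \sum_(0 <= i < n) fv n i <= 4 * n + 6.
Proof.
move=> Hn; have := fv_sum_aux n n.
case E: (n - 2 < n); case E4: (n %% 3 == 1) => /=; lia.
Qed.

Lemma fv4 n j : fv n j = 4 <-> (j %% 3 = 0 /\ j.+1 < n).
Proof.
rewrite /fv; case: ifP => [/andP[/eqP -> ->] //|/negbT].
rewrite negb_and => /orP H; case: ifP => _; split => //; case: H; lia.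
Qed.

Lemma fv0 n i : fv n i = 0 -> ~ (i %% 3 = 0 /\ i.+1 < n) /\ ~ (i.+2 = n /\ n %% 3 = 1).
Proof.
rewrite /fv; case: ifP => // /negbT; rewrite negb_and => /orP H1.
case: ifP => // /negbT; rewrite negb_and => /orP H2 _; case: H1; case: H2; lia.
Qed.

Lemma fv_nb n i : 3 <= n -> i < n -> fv n i = 0 ->
  fv n (i.+1 %% n) = 4 \/ (0 < i /\ fv n i.-1 = 4).
Proof.
move=> Hn Hi /fv0 H; rewrite !fv4.
have [Hl|Hl] := ltnP i.+1 n.
  rewrite (modn_small Hl); lia.
have -> : i.+1 = n by lia.
rewrite modnn mod0n; lia.
Qed.

Lemma cyc_nth (T : eqType) (e : rel T) (s : seq T) x0 i :
  cycle e s -> i < size s -> e (nth x0 s i) (nth x0 s (i.+1 %% size s)).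
Proof.
case: s => [//|y s'] /= /(pathP x0) H Hi.
have := H i; rewrite size_rcons => /(_ Hi).
rewrite nth_rcons.
have E : nth x0 (y :: rcons s' y) i = nth x0 (y :: s') i.
  case: i Hi {H} => [//|k] /= Hk; rewrite nth_rcons; case: ifP => //; lia.
rewrite E; case: ifP => Hl.
  by rewrite modn_small.
have -> : i = size s' by lia.
by rewrite eqxx modnn.
Qed.

Lemma dom_ok (T : finType) (e : rel T) (h : {ffun T -> 'I_5}) v w :
  e v w -> (h w : nat) = 4 -> #|AN e h v| + 3 <= \sum_(u in ANc e h v) (h u : nat).
Proof.
move=> Hvw Hw.
have wA : w \in AN e h v by rewrite inE Hvw Hw.
apply: (@leq_trans (\sum_(u in AN e h v) (h u : nat))); last first.
  rewrite [X in _ <= X]big_mkcond [X in X <= _]big_mkcond /=.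
  apply: leq_sum => u _; rewrite /ANc [u \in _ |: _]inE.
  by case: (u \in AN e h v); rewrite ?orbT.
rewrite (bigD1 w) //= Hw (cardD1 w) wA.
rewrite -sum1_card (eq_bigl (fun i => (i \in AN e h v) && (i != w))); last first.
  by move=> i; rewrite !inE andbC.
have : \sum_(i | (i \in AN e h v) && (i != w)) 1 <= \sum_(i | (i \in AN e h v) && (i != w)) (h i : nat).
  by apply: leq_sum => i /andP[+ _]; rewrite inE => /andP[_ ->].
rewrite add1n; lia.
Qed.

Lemma bigmin_le (I : eqType) (r : seq I) (P : pred I) (F : I -> nat) x j :
  P j -> j \in r -> \big[minn/x]_(i <- r | P i) F i <= F j.
Proof.
move=> Pj; elim: r => [//|y r IH]; rewrite inE big_cons.
case/orP => [/eqP <-|jr]; first by rewrite Pj geq_minl.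
case: ifP => _; last exact: IH.
by rewrite geq_min IH ?orbT.
Qed.

Theorem proposition24 (T : finType) (e : rel T)
  (e_sym : symmetric e) (e_irr : irreflexive e)
  (e_conn : forall x y : T, connect e x y)
  (e_cyc : exists s : seq T, graph_cycle e s) :
  ((triple_roman_domination_number e)%:R <=
     (3 * #|T| + 2)%:R - 5 * (girth e)%:R / 3 :> rat)%R.
Proof.
have [s0 Hs0] := e_cyc.
have Hle : size s0 <= #|T|.
  move: Hs0 => /and3P[_ /card_uniqP <- _]; exact: max_card.
have Hhas : has (has_cycle_len e) (iota 0 #|T|.+1).
  apply/hasP; exists (size s0); first by rewrite mem_iota; lia.
  by apply/existsP; exists (in_tuple s0).
have Hg := nth_find 0 Hhas.
have Hgl : girth e < #|T|.+1 by rewrite /girth -[X in _ < X](size_iota 0) -has_find.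
rewrite -/(girth e) nth_iota // add0n in Hg.
have [t Ht] := existsP Hg.
set s := val t.
have Hn : size s = girth e by rewrite size_tuple.
move: Ht; rewrite -/s => /and3P[Hs3 Hsu Hsc].
set n := girth e in Hn Hgl *.
have [x0 _] : exists x0 : T, true by case: (s) Hs3 => [|x ?]; [|exists x].
pose h : {ffun T -> 'I_5} := [ffun v => inord (if v \in s then fv n (index v s) else 3)].
have hv : forall v, (h v : nat) = if v \in s then fv n (index v s) else 3.
  move=> v; rewrite ffunE inordK //; case: ifP => // _; rewrite /fv.
  by case: ifP => //; case: ifP.
have H3 : is_3RDF e h.
  apply/forallP => v; apply/implyP; rewrite hv; case: ifP => // vin Hlt.
  have Hi : index v s < n by rewrite -Hn index_mem.
  have H0 : fv n (index v s) = 0 by move: Hlt; rewrite /fv; case: ifP => //; case: ifP.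
  have Hv : v = nth x0 s (index v s) by rewrite nth_index.
  have hn : forall j, j < n -> (h (nth x0 s j) : nat) = fv n j.
    by move=> j Hj; rewrite hv mem_nth ?Hn // index_uniq ?Hn.
  case: (@fv_nb n (index v s)) => //; first by lia.
    move=> H4; apply: (@dom_ok _ e h v (nth x0 s ((index v s).+1 %% n))).
      by rewrite {1}Hv -Hn; apply: cyc_nth; rewrite ?Hn.
    by rewrite hn // ltn_mod; lia.
  move=> [Hp H4]; apply: (@dom_ok _ e h v (nth x0 s (index v s).-1)).
    rewrite e_sym {2}Hv.
    have := @cyc_nth _ e s x0 (index v s).-1 Hsc.
    rewrite Hn prednK // modn_small //; apply; lia.
  by rewrite hn //; lia.
have Htri : triple_roman_domination_number e <= weight h.
  by apply: bigmin_le => //; rewrite mem_index_enum.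
have Hw : 3 * weight h + 5 * n <= 3 * (3 * #|T| + 2).
  rewrite /weight (bigID (fun v => v \in s)) /=.
  have E1 : \sum_(v | v \in s) (h v : nat) = \sum_(0 <= i < n) fv n i.
    rewrite -big_uniq // (big_nth x0) Hn; apply: eq_big_nat => i Hi.
    by rewrite hv mem_nth ?Hn // index_uniq ?Hn.
  have E2 : \sum_(v | v \notin s) (h v : nat) = #|[predC s]| * 3.
    rewrite -sum_nat_const; apply: eq_big => v; rewrite ?inE //.
    by move/negbTE => vn; rewrite hv vn.
  have Ec : n + #|[predC s]| = #|T|.
    by rewrite -(cardC (mem s)) -Hn; move/card_uniqP: (Hsu) => ->.
  have := @fv_sum n; rewrite E1 E2 -Hn; move: Ec Hs3; rewrite Hn; set S := \sum_(_ <= _ < _) _; set c := #|_|; lia.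
have N : 3 * triple_roman_domination_number e + 5 * n <= 3 * (3 * #|T| + 2) by lia.
move: N; rewrite -(ler_nat rat) natrD (natrM _ 3) (natrM _ 5) (natrM _ 3) natrD (natrM _ 3) => N.
lra.
Qed.
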